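(* Let $L_i \ge 1$ be an integer and, for each $\ell \in \{1,\dots,L_i\}$, let $K_\ell \ge 1$ be an integer. For each $\ell$ and each $k \in \{1,\dots,K_\ell\}$ let $\mathbf{c}_{\ell k} \in \mathbb{R}^{d_c}$ (codebook centers) and $\mathbf{o}_{i,\ell k} \in \mathbb{R}^{d_c}$ (capsule outputs) be vectors, and let $c^{(T)}_{i,\ell k} \ge 0$ be routing weights with $\sum_{k=1}^{K_\ell} c^{(T)}_{i,\ell k} = 1$ for each $\ell$. Let $s_{i,\ell} \in \arg\max_k c^{(T)}_{i,\ell k}$. Define $$\hat{\mathbf{x}}^{\mathrm{hard}}_i = \sum_{\ell=1}^{L_i} \mathbf{c}_{\ell s_{i,\ell}}, \qquad \hat{\mathbf{x}}^{\mathrm{soft}}_i = \sum_{\ell=1}^{L_i}\sum_{k=1}^{K_\ell} c^{(T)}_{i,\ell k}\,\mathbf{o}_{i,\ell k}.$$ Assume there are constants $\delta \ge 0$ and $C \ge 0$ with $\|\mathbf{o}_{i,\ell k} - \mathbf{c}_{\ell k}\|_2 \le \delta$ and $\|\mathbf{c}_{\ell k}\|_2 \le C$ for all $\ell, k$. Then $$\big\|\hat{\mathbf{x}}^{\mathrm{soft}}_i - \hat{\mathbf{x}}^{\mathrm{hard}}_i\big\|_2 \le L_i\delta + 2C\sum_{\ell=1}^{L_i}\big(1 - c^{(T)}_{i,\ell s_{i,\ell}}\big),$$ and consequently, for any vector $\mathbf{x}_i \in \mathbb{R}^{d_c}$, $$\big\|\mathbf{x}_i - \hat{\mathbf{x}}^{\mathrm{soft}}_i\big\|_2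 \le \big\|\mathbf{x}_i - \hat{\mathbf{x}}^{\mathrm{hard}}_i\big\|_2 + L_i\delta + 2C\sum_{\ell=1}^{L_i}\big(1 - c^{(T)}_{i,\ell s_{i,\ell}}\big).$$
   Context: In the paper's setting, $c^{(T)}_{i,\ell k}$ are the softmax routing weights of item $i$ over capsules $k$ at SID depth $\ell$ after $T$ routing iterations, $s_{i,\ell}$ is the emitted (argmax) token, $\mathbf{o}_{i,\ell k}$ is the squashed vote of capsule $k$, and $\mathbf{c}_{\ell k}$ is the codebook center of capsule $k$ at depth $\ell$; $\mathbf{x}_i$ is the item embedding, regarded as lying in the same space as the reconstructions. Only the properties listed in the claim are used. *)

(* Defs.v *)
From mathcomp Require Import all_boot all_order all_algebra.
From mathcomp Require Import reals.
Set Implicit Arguments. Unset Strict Implicit. Unset Printing Implicit Defensive.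
Import Order.TTheory GRing.Theory Num.Theory.
Local Open Scope ring_scope.

Definition norm2 (R : realType) (d : nat) (v : 'rV[R]_d) : R :=
  Num.sqrt (\sum_(j < d) (v 0 j) ^+ 2).

(* Main.v *)
Require Import Defs.
From mathcomp Require Import all_boot all_order all_algebra.
From mathcomp Require Import reals.
Import Order.TTheory GRing.Theory Num.Theory.
Local Open Scope ring_scope.
From mathcomp Require Import ring lra.

Set Implicit Arguments.
Section N2.
Context {R : realType} {d : nat}.
Implicit Types u v : 'rV[R]_d.

Lemma sumsq_ge0 v : 0 <= \sum_(j < d) (v 0 j) ^+ 2.
Proof. by apply: sumr_ge0 => j _; rewrite sqr_ge0. Qed.

Lemma n2ge0 v : 0 <= norm2 v.
Proof. exact: sqrtr_ge0. Qed.

Lemma n2sq v : norm2 v ^+ 2 = \sum_(j < d) (v 0 j) ^+ 2.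
Proof. by rewrite /norm2 sqr_sqrtr // sumsq_ge0. Qed.

Lemma n2_eq0 v : norm2 v = 0 -> forall j, v 0 j = 0.
Proof.
move=> h j.
have h2 : \sum_(j < d) (v 0 j) ^+ 2 = 0 by rewrite -n2sq h expr0n.
have := psumr_eq0P (fun j _ => sqr_ge0 (v 0 j)) h2 (i:=j) isT.
by move/eqP; rewrite sqrf_eq0 => /eqP.
Qed.

Lemma cs u v : \sum_(j < d) u 0 j * v 0 j <= norm2 u * norm2 v.
Proof.
set a := norm2 u; set b := norm2 v.
have [a0|ap] := eqVneq a 0.
  rewrite a0 mul0r big1 // => j _; by rewrite (@n2_eq0 u a0) mul0r.
have [b0|bp] := eqVneq b 0.
  rewrite b0 mulr0 big1 // => j _; by rewrite (@n2_eq0 v b0) mulr0.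
have ha : 0 < a by rewrite lt0r ap n2ge0.
have hb : 0 < b by rewrite lt0r bp n2ge0.
have H : 0 <= \sum_(j < d) (b * u 0 j - a * v 0 j) ^+ 2.
  by apply: sumr_ge0 => j _; rewrite sqr_ge0.
have E : \sum_(j < d) (b * u 0 j - a * v 0 j) ^+ 2 =
   b ^+ 2 * \sum_(j < d) (u 0 j) ^+ 2 - 2 * a * b * \sum_(j < d) u 0 j * v 0 j
   + a ^+ 2 * \sum_(j < d) (v 0 j) ^+ 2.
  rewrite !mulr_sumr -sumrB -big_split /=; apply: eq_bigr => j _; ring.
rewrite E -!n2sq -/a -/b in H.
have hab : 0 < a * b by rewrite mulr_gt0.
set S := \sum_(j < d) _ in H *.
have : 0 <= 2 * (a * b) * (a * b - S) by nra.
rewrite pmulr_rge0 ?mulr_gt0 // subr_ge0 //.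
Qed.

Lemma n2D u v : norm2 (u + v) <= norm2 u + norm2 v.
Proof.
rewrite {1}/norm2 -(ger0_norm (addr_ge0 (n2ge0 u) (n2ge0 v))) -sqrtr_sqr.
rewrite ler_sqrt ?sqr_ge0 //.
have -> : \sum_(j < d) ((u + v) 0 j) ^+ 2 =
  \sum_(j < d) (u 0 j) ^+ 2 + 2 * \sum_(j < d) u 0 j * v 0 j + \sum_(j < d) (v 0 j) ^+ 2.
  rewrite mulr_sumr -!big_split /=; apply: eq_bigr => j _; rewrite !mxE; ring.
rewrite -!n2sq; have := cs u v; nra.
Qed.

Lemma n2Z (a : R) v : norm2 (a *: v) = `|a| * norm2 v.
Proof.
rewrite /norm2 -sqrtr_sqr -sqrtrM ?sqr_ge0 // mulr_sumr; congr Num.sqrt.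
by apply: eq_bigr => j _; rewrite !mxE exprMn.
Qed.

Lemma n2N v : norm2 (- v) = norm2 v.
Proof. by rewrite -scaleN1r n2Z normrN normr1 mul1r. Qed.

Lemma n20 : norm2 (0 : 'rV[R]_d) = 0.
Proof. by rewrite -(scale0r 0) n2Z normr0 mul0r. Qed.

Lemma n2sum (I : finType) (P : pred I) (F : I -> 'rV[R]_d) :
  norm2 (\sum_(i | P i) F i) <= \sum_(i | P i) norm2 (F i).
Proof.
apply: (big_ind2 (fun x y => norm2 x <= y)); first by rewrite n20.
  by move=> x1 x2 y1 y2 h1 h2; apply: le_trans (n2D _ _) _; apply: lerD.
by [].
Qed.
End N2.

Theorem proposition1 (R : realType) (dc L : nat) (K : 'I_L -> nat)
    (cc : forall l : 'I_L, 'I_(K l) -> 'rV[R]_dc)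
    (o : forall l : 'I_L, 'I_(K l) -> 'rV[R]_dc)
    (w : forall l : 'I_L, 'I_(K l) -> R)
    (s : forall l : 'I_L, 'I_(K l))
    (delta C : R) :
  (1 <= L)%N ->
  (forall l, 1 <= K l)%N ->
  (forall l k, 0 <= w l k) ->
  (forall l, \sum_(k < K l) w l k = 1) ->
  (forall l (k : 'I_(K l)), w l k <= w l (s l)) ->
  0 <= delta -> 0 <= C ->
  (forall l k, norm2 (o l k - cc l k) <= delta) ->
  (forall l k, norm2 (cc l k) <= C) ->
  let xhard := \sum_(l < L) cc l (s l) in
  let xsoft := \sum_(l < L) \sum_(k < K l) w l k *: o l k in
  let bound := L%:R * delta + 2 * C * \sum_(l < L) (1 - w l (s l)) in
  norm2 (xsoft - xhard) <= bound /\
  (forall x : 'rV[R]_dc, norm2 (x - xsoft) <= norm2 (x - xhard) + bound).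
Proof.
move=> _ _ w0 w1 ws d0 C0 ho hc xhard xsoft bound.
have perl : forall l, norm2 (\sum_(k < K l) w l k *: o l k - cc l (s l))
    <= delta + 2 * C * (1 - w l (s l)).
  move=> l.
  have -> : \sum_(k < K l) w l k *: o l k - cc l (s l) =
     \sum_(k < K l) w l k *: (o l k - cc l k) + \sum_(k < K l) w l k *: (cc l k - cc l (s l)).
    rewrite -big_split /=.
    rewrite -[X in _ - X = _](scale1r) -(w1 l) scaler_suml -sumrB. apply: eq_bigr => k _; rewrite !scalerBr; by rewrite addrA subrK.
  apply: (le_trans (n2D _ _)); apply: lerD.
    apply: le_trans (n2sum _ _ _) _.
    apply: (@le_trans _ _ (\sum_(k < K l) w l k * delta)).
      by apply: ler_sum => k _; rewrite n2Z ger0_norm // ler_wpM2l.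
    by rewrite -mulr_suml w1 mul1r.
  apply: le_trans (n2sum _ _ _) _.
  rewrite (bigD1 (s l)) //= subrr scaler0 n20 add0r.
  have e1 := w1 l; rewrite (bigD1 (s l)) //= in e1.
  have -> : 1 - w l (s l) = \sum_(k < K l | k != s l) w l k by rewrite -e1 addrAC subrr add0r.
  rewrite mulr_sumr; apply: ler_sum => k _; rewrite n2Z ger0_norm //.
  rewrite mulrC ler_wpM2r //.
  apply: le_trans (n2D _ _) _; rewrite n2N.
  have := hc l k; have := hc l (s l); lra.
have part1 : norm2 (xsoft - xhard) <= bound.
  rewrite /xsoft /xhard /bound -sumrB.
  apply: le_trans (n2sum _ _ _) _.
  apply: le_trans (ler_sum _ (fun l _ => perl l)) _.
  rewrite big_split /= sumr_const card_ord -mulr_sumr mulr_natl.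
  by rewrite [L%:R * delta]mulr_natl.
split => // x.
have -> : x - xsoft = (x - xhard) + - (xsoft - xhard) by rewrite opprB addrA subrK.
apply: le_trans (n2D _ _) _; rewrite n2N; exact: lerD.
Qed.
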